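(* Let $\boldsymbol g_1,\dots,\boldsymbol g_m\in\mathbb{Z}[X^{\pm}]^K$, let $\mathcal{M}_{\mathbb{Z}}=\sum_j\mathbb{Z}[X^{\pm}]\boldsymbol g_j$ and $\mathcal{M}=\sum_j\mathbb{R}[X^{\pm}]\boldsymbol g_j$, and let $a_1,\dots,a_K\in\mathbb{Z}^n$ and $I,J\subseteq\{1,\dots,K\}$. Then there exists $\widetilde{\boldsymbol f}\in\mathcal{M}_{\mathbb{Z}}\cap(\mathbb{N}[X^{\pm}]\setminus\{0\})^K$ satisfying $$(O_v\cup J)\cap M_v(I,\boldsymbol f)\neq\emptyset\quad\text{for every }v\in\mathbb{R}^n\setminus\{0\}\qquad(\ast)$$ if and only if there exists $\boldsymbol f\in\mathcal{M}\cap(\mathbb{R}_{\ge0}[X^{\pm}]\setminus\{0\})^K$ satisfying $(\ast)$.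
   Context: $R[X^{\pm}]=R[X_1^{\pm1},\dots,X_n^{\pm1}]$, $X^b=X_1^{b_1}\cdots X_n^{b_n}$. For $f=\sum c_bX^b\neq0$ and $v\in\mathbb{R}^n\setminus\{0\}$, $\deg_v(f)=\max\{v\cdot b:c_b\ne0\}$, $\deg_v(0)=-\infty$. $M_v(I,\boldsymbol f)=\{i\in I:\deg_v(f_i)=\max_{i'\in I}\deg_v(f_{i'})\}$; $O_v=\{i\in\{1,\dots,K\}:a_i\not\perp v\}$. *)

(* Defs.v *)
From HB Require Import structures.
From mathcomp Require Import all_boot all_order all_algebra.
From mathcomp Require Import reals constructive_ereal.
Set Implicit Arguments. Unset Strict Implicit. Unset Printing Implicit Defensive.
Import Order.TTheory GRing.Theory Num.Theory.
Local Open Scope ring_scope.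

(* A Laurent polynomial in n variables with coefficients in R is represented
   by a finite list of (exponent, coefficient) terms; the exponent b ∈ Z^n is
   a row vector of integers, and the polynomial is sum_(term) c X^b.
   Equality of Laurent polynomials is equality of all coefficients. *)
Definition lpoly (R : Type) (n : nat) := seq ('rV[int]_n * R).

Definition lcoef (R : nmodType) (n : nat) (p : lpoly R n) (b : 'rV[int]_n) : R :=
  \sum_(x <- p | x.1 == b) x.2.

Definition lmul (R : pzRingType) (n : nat) (p q : lpoly R n) : lpoly R n :=
  [seq (x.1 + y.1, x.2 * y.2) | x <- p, y <- q].

Definition lmap (R : pzRingType) (n : nat) (p : lpoly int n) : lpoly R n :=
  [seq (x.1, x.2%:~R) | x <- p].

Definition lnonzero (R : nmodType) (n : nat) (p : lpoly R n) : Prop :=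
  exists b, lcoef p b != 0.

Definition lnonneg (R : numDomainType) (n : nat) (p : lpoly R n) : Prop :=
  forall b, 0 <= lcoef p b.

Definition in_module (R : pzRingType) (n K m : nat)
    (g : 'I_m -> 'I_K -> lpoly R n) (f : 'I_K -> lpoly R n) : Prop :=
  exists h : 'I_m -> lpoly R n, forall (k : 'I_K) (b : 'rV[int]_n),
    lcoef (f k) b = lcoef (flatten [seq lmul (h j) (g j k) | j <- enum 'I_m]) b.

Definition dotv (R : realType) (n : nat) (v : 'rV[R]_n) (b : 'rV[int]_n) : R :=
  \sum_(i < n) v ord0 i * (b ord0 i)%:~R.

Definition degv (R : realType) (n : nat) (v : 'rV[R]_n) (p : lpoly R n) : \bar R :=
  \big[Order.max/-oo%E]_(x <- p | lcoef p x.1 != 0) (dotv v x.1)%:E.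

Definition Mv (R : realType) (n K : nat) (v : 'rV[R]_n) (I : {set 'I_K})
    (f : 'I_K -> lpoly R n) : {set 'I_K} :=
  [set i in I | degv v (f i) == \big[Order.max/-oo%E]_(i' in I) degv v (f i')].

Definition Ov (R : realType) (n K : nat) (v : 'rV[R]_n) (a : 'I_K -> 'rV[int]_n)
  : {set 'I_K} := [set i | dotv v (a i) != 0].

Definition star_cond (R : realType) (n K : nat) (a : 'I_K -> 'rV[int]_n)
    (I J : {set 'I_K}) (f : 'I_K -> lpoly R n) : Prop :=
  forall v : 'rV[R]_n, v != 0 -> (Ov v a :|: J) :&: Mv v I f != set0.

(* Main.v *)
Require Import Defs.
From HB Require Import structures.
From mathcomp Require Import all_boot all_order all_algebra.
From mathcomp Require Import reals constructive_ereal.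
From mathcomp Require Import lra.
Import Order.TTheory GRing.Theory Num.Theory.
Local Open Scope ring_scope.

Lemma fin_lb (R : realDomainType) (T : finType) (v : T -> R) (P : pred T) :
  (forall r, P r -> 0 < v r) -> exists2 e : R, 0 < e & forall r, P r -> e <= v r.
Proof.
move=> Hv; exists (\big[Num.min/1]_(r | P r) v r).
  by apply: (big_ind (fun x => 0 < x)) => // x y x0 y0; rewrite lt_min x0 y0.
move=> r Pr; rewrite (bigD1 r) //= ge_min lexx //.
Qed.

Lemma keyQ (R : realType) N p (c : 'rV[R]_N) (A : 'M[int]_(N,p)) :
 (forall r, 0 <= (c *m map_mx intr A) 0 r) ->
 exists c' : 'rV[rat]_N, forall r,
   ((c' *m map_mx intr A) 0 r == 0) = ((c *m map_mx intr A) 0 r == 0)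
   /\ 0 <= (c' *m map_mx intr A) 0 r.
Proof.
move=> Hc.
set AR : 'M[R]_(N,p) := map_mx intr A; set AQ : 'M[rat]_(N,p) := map_mx intr A.
have AQR : map_mx ratr AQ = AR by apply/matrixP=> i j; rewrite !mxE ratr_int.
pose d : 'rV[rat]_p := \row_r ((c *m AR) 0 r == 0)%:R.
pose AZ := AQ *m diag_mx d.
have cK : (c <= kermx (map_mx ratr AZ))%MS.
  apply/sub_kermxP; rewrite map_mxM AQR map_diag_mx mulmxA mul_mx_diag.
  apply/matrixP=> i j; rewrite ord1 !mxE rmorph_nat.
  by case: eqP => [->|_]; rewrite ?mul0r ?mulr0.
rewrite -map_kermx in cK; case/submxP: cK => w Hw.
set KQ := kermx AZ in Hw.
set KR := map_mx ratr KQ in Hw.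
have HK : KQ *m AZ = 0 by exact: mulmx_ker.
clearbody KQ.
have [eps eps0 Heps] : exists2 eps : R, 0 < eps & forall r, (c *m AR) 0 r != 0 -> eps <= (c *m AR) 0 r.
  apply: fin_lb => r H; by rewrite lt_neqAle eq_sym H Hc.
pose M : R := \sum_r \sum_t \sum_i `|KR i t| * `|AR t r|.
have M0 : 0 <= M by do 3!(apply: sumr_ge0 => ? _); rewrite mulr_ge0.
pose del := eps / (M + 1).
have M10 : 0 < M + 1 by rewrite ltr_wpDl.
have del0 : 0 < del by rewrite divr_gt0.
have delM : del * M < eps.
  rewrite /del mulrAC ltr_pdivrMr // ltr_pM2l // ltrDl //.
have [w' Hw'] : exists w' : 'I_N -> rat, forall i, `|ratr (w' i) - w 0 i| < del.
  have H : forall i : 'I_N, exists q : rat, `|ratr q - w 0 i| < del.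
    move=> i; have [|q] := @rat_in_itvoo R (w 0 i - del) (w 0 i + del).
      by rewrite ltrD2l gtrN.
    rewrite in_itv /= => /andP[h1 h2]; exists q.
    rewrite ltr_norml; apply/andP; split; lra.
  exact: (@fin_all_exists _ (fun _ => rat) _ H).
pose wq : 'rV[rat]_N := \row_i w' i.
exists (wq *m KQ) => r.
have Z0 : (wq *m KQ *m AQ) 0 r * d 0 r = 0.
  have md : forall X : 'M[rat]_(1,p), (X *m diag_mx d) 0 r = X 0 r * d 0 r.
    by move=> X; rewrite mul_mx_diag mxE.
  have := congr1 (fun X => (wq *m X) 0 r) HK.
  by rewrite /AZ !mulmxA md mulmx0 => ->; rewrite mxE.
have Er : @ratr R ((wq *m KQ *m AQ) 0 r) =
    (c *m AR) 0 r + ((map_mx (@ratr R) wq - w) *m KR *m AR) 0 r.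
  have E1 : (map_mx (@ratr R) (wq *m KQ *m AQ)) 0 r = @ratr R ((wq *m KQ *m AQ) 0 r).
    by rewrite mxE.
  rewrite -E1.
  rewrite !map_mxM AQR -/KR.
  rewrite Hw; set W := map_mx (@ratr R) wq.
  have -> : W = (W - w) + w by rewrite subrK.
  by rewrite addrK !mulmxDl mxE addrC.
have Bd : `|((map_mx (@ratr R) wq - w) *m KR *m AR) 0 r| <= del * M.
  set e := map_mx (@ratr R) wq - w.
  have He : forall i, `|e 0 i| <= del.
    by move=> i; rewrite !mxE ltW.
  have MrM : \sum_t \sum_i `|KR i t| * `|AR t r| <= M.
    rewrite /M (bigD1 r) //= lerDl.
    by apply: sumr_ge0 => ? _; do 2!(apply: sumr_ge0 => ? _); rewrite mulr_ge0.
  have H2 : del * \sum_t \sum_i `|KR i t| * `|AR t r| <= del * M by rewrite ler_pM2l.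
  apply: le_trans H2.
  rewrite mxE; apply: le_trans (ler_norm_sum _ _ _) _.
  rewrite mulr_sumr; apply: ler_sum => t _; rewrite mxE normrM.
  apply: le_trans (ler_wpM2r (normr_ge0 _) (ler_norm_sum _ _ _)) _.
  rewrite mulr_suml mulr_sumr; apply: ler_sum => i _.
  rewrite normrM -mulrA; apply: ler_wpM2r; first by rewrite mulr_ge0.
  exact: He.
have [z0|nz] := eqVneq ((c *m AR) 0 r) 0.
  have d1 : d 0 r = 1 by rewrite mxE z0 eqxx.
  move: Z0; rewrite d1 mulr1 => ->; by rewrite eqxx lexx.
have x0 : 0 < (wq *m KQ *m AQ) 0 r.
  rewrite -(ltr0q R) Er.
  have := Heps r nz; move: Bd; set D := (_ 0 r) in Er *; set v := (c *m AR) 0 r.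
  rewrite ler_norml => /andP[h1 h2] h3; lra.
by rewrite gt_eqF // ltW.
Qed.


Lemma keyF (R : realType) (T C : finType) (A : C -> T -> int) (c : T -> R) :
 (forall r, 0 <= \sum_t c t * (A r t)%:~R) ->
 exists z : T -> int, forall r,
  ((\sum_t z t * A r t == 0) = (\sum_t c t * (A r t)%:~R == 0))
  /\ 0 <= \sum_t z t * A r t.
Proof.
move=> Hc.
pose cm : 'rV[R]_#|T| := \row_i c (enum_val i).
pose Am : 'M[int]_(#|T|, #|C|) := \matrix_(i, j) A (enum_val j) (enum_val i).
have EF : forall (F : T -> R), \sum_t F t = \sum_(i < #|T|) F (enum_val i).
  by move=> F; rewrite (big_enum_val (A := T)).
have EFi : forall (F : T -> int), \sum_t F t = \sum_(i < #|T|) F (enum_val i).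
  by move=> F; rewrite (big_enum_val (A := T)).
have Ec : forall j, (cm *m map_mx intr Am) 0 j = \sum_t c t * (A (enum_val j) t)%:~R.
  by move=> j; rewrite mxE EF; apply: eq_bigr => i _; rewrite !mxE.
have Hcm : forall j, 0 <= (cm *m map_mx intr Am) 0 j by move=> j; rewrite Ec; apply: Hc.
have [c' Hc'] := @keyQ R _ _ cm Am Hcm.
pose D : int := \prod_i denq (c' 0 i).
pose zm i : int := numq (c' 0 i) * \prod_(j | j != i) denq (c' 0 j).
have Ezm : forall i, (zm i)%:~R = c' 0 i * D%:~R :> rat.
  move=> i; rewrite /D (bigD1 i) //= /zm !rmorphM /= mulrA.
  congr (_ * _).
  rewrite -{2}(divq_num_den (c' 0 i)) divfK // intr_eq0; exact: denq_neq0.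
have D0 : 0 < D by apply: prodr_gt0 => i _; exact: denq_gt0.
exists (fun t => zm (enum_rank t)) => r.
have Er : ((\sum_t zm (enum_rank t) * A r t)%:~R : rat)
     = (c' *m map_mx intr Am) 0 (enum_rank r) * D%:~R.
  rewrite EFi rmorph_sum mxE mulr_suml; apply: eq_bigr => i _.
  by rewrite enum_valK !mxE enum_rankK rmorphM /= Ezm mulrAC.
have [h1 h2] := Hc' (enum_rank r).
rewrite Ec enum_rankK in h1; rewrite -h1.
have Dq : (0 : rat) < D%:~R by rewrite ltr0z.
split.
  by rewrite -(intr_eq0 rat) Er mulf_eq0 (gt_eqF Dq) orbF.
by rewrite -(ler0z rat) Er mulr_ge0 // ltW.
Qed.

Lemma lcoef_lmap (R : pzRingType) n (p : lpoly int n) b :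
  lcoef (lmap R p) b = (lcoef p b)%:~R.
Proof. by rewrite /lcoef /lmap big_map rmorph_sum. Qed.

Lemma lcoef_lmul (R : pzRingType) n (p q : lpoly R n) b :
  lcoef (lmul p q) b = \sum_(x <- p) x.2 * lcoef q (b - x.1).
Proof.
elim: p => [|x p IH]; first by rewrite /lcoef /lmul !big_nil.
rewrite big_cons -IH /lcoef /lmul /= big_cat big_map /=; congr (_ + _).
rewrite big_mkcond [in RHS]big_mkcond mulr_sumr; apply: eq_bigr => y _ /=.
have -> : (x.1 + y.1 == b) = (y.1 == b - x.1).
  by apply/eqP/eqP => [<-|->]; [rewrite addrC addKr | rewrite addrC subrK].
by case: ifP; rewrite ?mulr0.
Qed.

Lemma lcoef_mod (R : pzRingType) n m (H G : 'I_m -> lpoly R n) b :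
  lcoef (flatten [seq lmul (H j) (G j) | j <- enum 'I_m]) b =
  \sum_(j < m) \sum_(x <- H j) x.2 * lcoef (G j) (b - x.1).
Proof.
rewrite {1}/lcoef big_flatten big_map big_enum /=; apply: eq_big => // j _.
by rewrite -lcoef_lmul.
Qed.

Lemma lcoef_nz (V : nmodType) n (p : lpoly V n) b :
  lcoef p b != 0 -> exists2 y, y \in p & y.1 = b.
Proof.
case: (boolP (has (fun y : 'rV[int]_n * V => y.1 == b) p)).
  by case/hasP => y yp /eqP <-; exists y.
move/hasPn => Hn; rewrite /lcoef big1_seq ?eqxx // => y /andP[yb yp].
by move: (Hn y yp); rewrite yb.
Qed.

Lemma le_bigmaxE (R : realType) (X : eqType) (s : seq X) (P : pred X)
   (F : X -> \bar R) x :
  x \in s -> P x -> (F x <= \big[Order.max/-oo%E]_(y <- s | P y) F y)%O.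
Proof.
elim: s => //= y s IH; rewrite inE big_cons => /orP[/eqP<- Px|xs Px].
  by rewrite Px le_max lexx.
by case: (P y); rewrite ?le_max IH ?orbT.
Qed.

Lemma degv_le (R : realType) n (v : 'rV[R]_n) (p q : lpoly R n) :
  (forall b, lcoef p b != 0 -> lcoef q b != 0) -> (degv v p <= degv v q)%O.
Proof.
move=> H; rewrite /degv big_seq_cond.
apply: (big_ind (fun x => x <= _)%O).
- exact: leNye.
- by move=> x y hx hy; rewrite ge_max hx hy.
move=> x /andP[xp nz]; have nz' := H _ nz.
have [y yq Hy] := @lcoef_nz _ _ _ _ nz'.
rewrite -Hy; apply: (@le_bigmaxE R _ q _ (fun y => (dotv v y.1)%:E) y) => //=.
by rewrite Hy.
Qed.

Lemma star_ext (R : realType) n K (a : 'I_K -> 'rV[int]_n) I J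
    (F G : 'I_K -> lpoly R n) :
  (forall k b, (lcoef (F k) b != 0) = (lcoef (G k) b != 0)) ->
  star_cond a I J F -> star_cond a I J G.
Proof.
move=> H HF v v0; have E : forall k, degv v (F k) = degv v (G k).
  move=> k; apply/eqP; rewrite eq_le !degv_le // => b; by rewrite H.
have EM : Mv v I F = Mv v I G.
  rewrite /Mv (eq_bigr (fun i => degv v (G i))) //; apply/setP => i.
  by rewrite !inE E.
by rewrite -EM; apply: HF.
Qed.

Lemma sum_pad (V : nmodType) (X : Type) (x0 : X) (s : seq X) (S : nat) (F : X -> V) :
  (size s <= S)%N -> F x0 = 0 -> \sum_(x <- s) F x = \sum_(i < S) F (nth x0 s i).
Proof.
move=> Hs F0; rewrite (big_nth x0) -(big_mkord xpredT (fun i => F (nth x0 s i))).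
rewrite (@big_cat_nat _ _ _ (size s) 0 S _ _ (leq0n _) Hs) /= [X in _ + X]big_nat_cond [X in _ + X]big1 ?addr0 //.
by move=> i /andP[/andP[hi _] _]; rewrite nth_default.
Qed.

Theorem mainTheorem8 (R : realType) (n K m : nat)
    (g : 'I_m -> 'I_K -> lpoly int n) (a : 'I_K -> 'rV[int]_n)
    (I J : {set 'I_K}) :
  (exists ft : 'I_K -> lpoly int n,
      in_module g ft /\
      (forall k, lnonneg (ft k) /\ lnonzero (ft k)) /\
      star_cond a I J (fun k => lmap R (ft k)))
  <->
  (exists f : 'I_K -> lpoly R n,
      in_module (fun j k => lmap R (g j k)) f /\
      (forall k, lnonneg (f k) /\ lnonzero (f k)) /\
      star_cond a I J f).
Proof.
split.
  move=> [ft [[h Hh] [Hpos Hstar]]].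
  exists (fun k => lmap R (ft k)); split; last split => //.
    exists (fun j => lmap R (h j)) => k b.
    rewrite lcoef_lmap Hh !lcoef_mod rmorph_sum; apply: eq_bigr => j _.
    rewrite rmorph_sum /lmap big_map; apply: eq_bigr => x _.
    by rewrite rmorphM lcoef_lmap.
  move=> k; have [Hn [b Hb]] := Hpos k; split.
    by move=> b'; rewrite lcoef_lmap ler0z.
  by exists b; rewrite lcoef_lmap intr_eq0.
move=> [f [[h Hh] [Hpos Hstar]]].
pose S := (\max_(j < m) size (h j))%N.
pose G := (\max_(j < m) \max_(k < K) size (g j k))%N.
pose x0 : 'rV[int]_n * R := (0, 0).
pose y0 : 'rV[int]_n * int := (0, 0).
pose T := ('I_m * 'I_S)%type.
pose e (t : T) := (nth x0 (h t.1) t.2).1.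
pose cr (t : T) := (nth x0 (h t.1) t.2).2.
pose Arow k b (t : T) := lcoef (g t.1 k) (b - e t).
have Ef : forall k b, lcoef (f k) b = \sum_(t : T) cr t * (Arow k b t)%:~R.
  move=> k b; rewrite Hh lcoef_mod -(pair_big xpredT xpredT (fun j i => cr (j, i) * (Arow k b (j, i))%:~R)) /=.
  apply: eq_bigr => j _.
  rewrite (@sum_pad _ _ x0 _ S (fun x => x.2 * lcoef (lmap R (g j k)) (b - x.1))).
  - by apply: eq_bigr => i _; rewrite lcoef_lmap.
  - by rewrite /S; apply: (@leq_bigmax _ (fun j => size (h j)) j).
  - by rewrite /= mul0r.
pose C := ('I_K * (T * 'I_G))%type.
pose bC (r : C) := e r.2.1 + (nth y0 (g r.2.1.1 r.1) r.2.2).1.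
pose A (r : C) := Arow r.1 (bC r).
have HA : forall r, 0 <= \sum_t cr t * (A r t)%:~R.
  by move=> r; rewrite -Ef; case: (Hpos r.1) => Hn _; apply: Hn.
have [z Hz] := @keyF R T C A cr HA.
pose h' (j : 'I_m) : lpoly int n := [seq (e (j, i), z (j, i)) | i <- enum 'I_S].
pose ft k := flatten [seq lmul (h' j) (g j k) | j <- enum 'I_m].
have Eft : forall k b, lcoef (ft k) b = \sum_(t : T) z t * Arow k b t.
  move=> k b; rewrite lcoef_mod.
  rewrite (eq_bigr (fun j => \sum_(i < S) z (j,i) * Arow k b (j,i))); last first.
    by move=> j _; rewrite big_map big_enum.
  by rewrite pair_bigA; apply: eq_bigr => -[j i] _.
have Key : forall k b, ((lcoef (ft k) b == 0) = (lcoef (f k) b == 0))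
                       /\ 0 <= lcoef (ft k) b.
  move=> k b; rewrite Eft Ef.
  case: (boolP [exists t, Arow k b t != 0]) => [/existsP[t nz]|/existsPn Hall].
    have [y yg Hy] := @lcoef_nz _ _ _ _ nz.
    have uG : (index y (g t.1 k) < G)%N.
      apply: (@leq_trans (size (g t.1 k))); first by rewrite index_mem.
      apply: (@leq_trans (\max_(k0 < K) size (g t.1 k0))).
        exact: (@leq_bigmax _ (fun k0 => size (g t.1 k0)) k).
      exact: (@leq_bigmax _ (fun j => \max_(k0 < K) size (g j k0)) t.1).
    pose r : C := (k, (t, Ordinal uG)).
    have Eb : bC r = b by rewrite /bC /= nth_index // Hy addrC subrK.
    by have := Hz r; rewrite /A Eb.
  have Z : forall t, Arow k b t = 0 by move=> t; apply/eqP; exact: negbNE (Hall t).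
  rewrite !big1 ?eqxx ?lexx // => t _; by rewrite Z ?mulr0.
exists ft; split; first by exists h'.
split.
  move=> k; split.
    by move=> b; case: (Key k b).
  case: (Hpos k) => _ [b Hb]; exists b; case: (Key k b) => -> _; exact: Hb.
apply: (@star_ext R n K a I J f _ _ Hstar) => k b.
by rewrite lcoef_lmap intr_eq0; case: (Key k b) => ->.
Qed.
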